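(* Let $q\ge4$ be even, let $\alpha,\beta\in\mathbb{F}_{q^2}$ with $\alpha\neq0$, $\beta\notin\mathbb{F}_q$ and $\alpha^{q+1}/(\beta^q+\beta)^2$ of absolute trace $0$, and let $R=(0,\delta,1)$. Then (1) $\mathrm{pedal}(R)$ consists exactly of the points $Q_x=(x,\,\alpha x^2+\alpha^q x^{2q}+\delta^q,\,1)$ with $x\in\mathbb{F}_{q^2}$ satisfying $1+\alpha x^2+\alpha^q x^{2q}+(\beta+\beta^q)x^{q+1}=0$; (2) the points of $\mathrm{pedal}(R)$ are contained in the lines of the Baer pencil joining the vertex $U_\infty=(1,0,0)$ to the Baer subline $\{E_{s+\delta^q}=(0,s+\delta^q,1): s\in\mathbb{F}_q\}\cup\{(0,1,0)\}$.
   Context: Points of $\mathrm{PG}(2,q^2)$ have homogeneous coordinates $(x,y,z)$. $\delta\in\mathbb{F}_{q^2}\setminus\mathbb{F}_q$ satisfies $\delta^q=1+\delta$ and $\delta^2=v+\delta$ with $v\in\mathbb{F}_q$, $v\ne1$, of absolute trace $T(v)=v+v^2+\dots+v^{2^{h-1}}=1$ where $q=2^h$. $\mathcal U_{\alpha\beta}=\{(x,\alpha x^2+\beta x^{q+1}+r,1): x\in\mathbb{F}_{q^2}, r\in\mathbb{F}_q\}\cup\{(0,1,0)\}$, which under the hypotheses is a (non-classical) unital: a set of $q^3+1$ points meeting every line in $1$ or $q+1$ points. For a point $P$ not on the unital, $\mathrm{pedal}(P)$ is the set of points of contact of the $q+1$ tangent lines (lines meeting the unital in exactly one point) through $P$.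 A Baer pencil is the set of $q+1$ lines joining a vertex point to the $q+1$ points of a Baer subline (a set of points of a line projectively equivalent to $\mathrm{PG}(1,q)$). *)

(* Defs.v *)
From HB Require Import structures.
From mathcomp Require Import all_boot all_order all_algebra all_field.
Set Implicit Arguments. Unset Strict Implicit. Unset Printing Implicit Defensive.
Import GRing.Theory.
Local Open Scope ring_scope.

Section PG2.
Variable F : fieldType.

(* homogeneous coordinate vectors (x, y, z) *)
Definition pt := (F * F * F)%type.
Definition mkpt (x y z : F) : pt := (x, y, z).
Definition px (p : pt) := p.1.1.
Definition py (p : pt) := p.1.2.
Definition pz (p : pt) := p.2.

Definition nonzero_pt (p : pt) : Prop := p <> mkpt 0 0 0.

Definition scale_pt (k : F) (p : pt) : pt := mkpt (k * px p) (k * py p) (k * pz p).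

(* p and p' represent the same projective point (p assumed nonzero when used) *)
Definition proj_eq (p p' : pt) : Prop := exists2 k : F, k != 0 & p' = scale_pt k p.

(* lines are given by nonzero coefficient vectors [a,b,c]: a x + b y + c z = 0 *)
Definition on_line (l p : pt) : Prop :=
  px l * px p + py l * py p + pz l * pz p = 0.

Definition det3 (a b c : pt) : F :=
  px a * (py b * pz c - pz b * py c)
  - py a * (px b * pz c - pz b * px c)
  + pz a * (px b * py c - py b * px c).

Definition collinear (a b c : pt) : Prop := det3 a b c = 0.

(* x lies in the subfield F_q (as subfield of F_{q^2}) *)
Definition inFq (q : nat) (x : F) : Prop := x ^+ q = x.

(* absolute trace of an element of F_q, q = 2^h *)
Definition abs_trace (h : nat) (x : F) : F := \sum_(i < h) x ^+ (2 ^ i).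

Definition Uab (q : nat) (alpha beta : F) (p : pt) : Prop :=
  (exists x r : F, inFq q r /\
     proj_eq (mkpt x (alpha * x ^+ 2 + beta * x ^+ (q.+1) + r) 1) p)
  \/ proj_eq (mkpt 0 1 0) p.

(* l is a tangent line to the point set U with contact point T:
   l meets U in exactly one (projective) point, namely T *)
Definition tangent_at (U : pt -> Prop) (l T : pt) : Prop :=
  nonzero_pt l /\ U T /\ on_line l T /\
  (forall P, nonzero_pt P -> U P -> on_line l P -> proj_eq T P).

Definition pedal (U : pt -> Prop) (R T : pt) : Prop :=
  exists l, tangent_at U l T /\ on_line l R.

End PG2.

(* Main.v *)
Require Import Defs.
From HB Require Import structures.
From mathcomp Require Import all_boot all_order all_algebra all_field.
From mathcomp Require Import ring.
Import GRing.Theory.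
Local Open Scope ring_scope.


Lemma char2F (F : finFieldType) h : #|F| = ((2 ^ h) ^ 2)%N -> 2%N \in [pchar F].
Proof. by move=> hF; apply: (@card_finPcharP F 2 (h * 2)); rewrite // hF expnM. Qed.

Lemma frob2 (F : comNzRingType) (c2 : 2%N \in [pchar F]) n (x y : F) :
  (x + y) ^+ (2 ^ n) = x ^+ (2 ^ n) + y ^+ (2 ^ n).
Proof.
elim: n => [|n IH]; first by rewrite !expr1.
by rewrite expnSr !exprM IH sqrrD mulrn_pchar // addr0.
Qed.

Section S.
Variables (F : finFieldType) (h q : nat) (delta alpha beta : F).
Hypotheses (hq : q = (2 ^ h)%N) (hF : #|F| = (q ^ 2)%N)
  (hdq : delta ^+ q = 1 + delta) (hb : ~ (beta ^+ q = beta)).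

Lemma c2 : 2%N \in [pchar F].
Proof. by apply: (@char2F F h); rewrite hF hq. Qed.
Local Notation c2' := c2.

Lemma fD (x y : F) : (x + y) ^+ q = x ^+ q + y ^+ q.
Proof. by rewrite hq frob2 // c2. Qed.

Lemma fK (x : F) : (x ^+ q) ^+ q = x.
Proof. by rewrite -exprM mulnn -hF expf_card. Qed.

Lemma sq2 (x y : F) : (x + y) ^+ 2 = x ^+ 2 + y ^+ 2.
Proof. by rewrite sqrrD mulrn_pchar ?c2 // addr0. Qed.

Lemma xx (x : F) : x + x = 0.
Proof. exact: (addrr_pchar2 c2). Qed.

Lemma opp2 (x : F) : - x = x.
Proof. exact: (oppr_pchar2 c2). Qed.

Lemma subr2 (x y : F) : x - y = x + y.
Proof. by rewrite opp2. Qed.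

Lemma q0 : (0 < q)%N.
Proof. by rewrite hq expn_gt0. Qed.

Definition B := beta + beta ^+ q.

Lemma BqE : B ^+ q = B.
Proof. by rewrite /B fD fK addrC. Qed.

Lemma B0 : B != 0.
Proof.
apply/negP; rewrite /B addr_eq0 opp2 => /eqP E; apply: hb.
by rewrite {1}E fK.
Qed.

Definition Qf (x : F) := alpha * x ^+ 2 + alpha ^+ q * x ^+ (2 * q) + B * x ^+ q.+1.

Lemma QfE x : Qf x = alpha * x ^+ 2 + (alpha * x ^+ 2) ^+ q + B * (x ^+ q * x).
Proof. by rewrite /Qf exprMn -exprM (exprSr x q). Qed.

Lemma Fq_tr (z : F) : (z + z ^+ q) ^+ q = z + z ^+ q.
Proof. by rewrite fD fK addrC. Qed.

Lemma Fq_norm (u : F) : (B * (u ^+ q * u)) ^+ q = B * (u ^+ q * u).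
Proof. by rewrite !exprMn BqE fK (mulrC u). Qed.

Lemma QfFq u : Qf u ^+ q = Qf u.
Proof. by rewrite QfE fD Fq_tr Fq_norm. Qed.

Lemma QD x s : Qf (x + s) = Qf x + Qf s + B * (x ^+ q * s + x * s ^+ q).
Proof. rewrite /Qf !(mulnC 2%N) !exprM !sq2 !fD !sq2 !(exprSr _ q) !fD. ring. Qed.


Lemma trace_tel (w N : F) : w ^+ 2 + w = N -> abs_trace h N = w ^+ q + w.
Proof.
move=> <-; rewrite /abs_trace -(big_mkord xpredT (fun i => (w ^+ 2 + w) ^+ (2 ^ i))).
rewrite (eq_bigr (fun i => w ^+ (2 ^ i.+1) - w ^+ (2 ^ i))); last first.
  by move=> i _; rewrite frob2 ?c2 // -exprM -expnS subr2.
by rewrite telescope_sumr // expn0 expr1 subr2 hq.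
Qed.

Lemma aniso (htr : abs_trace h (alpha ^+ q.+1 / (beta ^+ q + beta) ^+ 2) = 0)
  (y : F) : y != 0 -> Qf y != 0.
Proof.
move=> y0; apply/negP => /eqP Hq.
have B0 := B0.
have yq0 : y ^+ q != 0 by rewrite expf_neq0.
pose w := alpha * y / (B * y ^+ q).
have wq : w ^+ q = alpha ^+ q * y ^+ q / (B * y).
  by rewrite /w !exprMn exprVn exprMn BqE fK.
have E : alpha * y ^+ 2 + alpha ^+ q * (y ^+ q) ^+ 2 = B * (y ^+ q * y).
  move: Hq; rewrite /Qf (mulnC 2%N) exprM (exprSr y q).
  by move/eqP; rewrite addr_eq0 opp2 => /eqP.
have W1 : w + w ^+ q = 1.
  rewrite wq /w.
  have -> : alpha * y / (B * y ^+ q) + alpha ^+ q * y ^+ q / (B * y) =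
     (alpha * y ^+ 2 + alpha ^+ q * (y ^+ q) ^+ 2) / (B * (y ^+ q * y)).
    by field; rewrite B0 yq0 y0.
  by rewrite E divff // !mulf_neq0.
have WN : w ^+ q.+1 = alpha ^+ q.+1 / (beta ^+ q + beta) ^+ 2.
  rewrite exprSr wq /w exprS (addrC _ beta) -/B.
  by field; rewrite B0 yq0 y0.
have W2 : w ^+ 2 + w = alpha ^+ q.+1 / (beta ^+ q + beta) ^+ 2.
  have Ew : w = w ^+ 2 + w ^+ q * w by rewrite -{1}[w]mulr1 -W1; ring.
  by rewrite -WN (exprSr w q) {2}Ew addrA xx add0r.
move: htr; rewrite (trace_tel _ _ W2) addrC W1 => /eqP; by rewrite oner_eq0.
Qed.

Lemma two0 : (2%:R : F) = 0.
Proof. by case/andP: c2 => _ /eqP. Qed.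

Lemma eq2 (x y : F) : (x == y) = (x + y == 0).
Proof. by rewrite addr_eq0 opp2. Qed.

Definition fU (x : F) := alpha * x ^+ 2 + beta * x ^+ q.+1.
Definition g (a x : F) := a * x + fU x + delta.
Definition Ph (a x : F) := a * x + a ^+ q * x ^+ q + Qf x + 1.
Definition Mf (a x u : F) := B * (x ^+ q * u + x * u ^+ q) + a * u + a ^+ q * u ^+ q.

Lemma GinFq a x : inFq q (g a x) <-> Ph a x = 0.
Proof.
have gq : g a x ^+ q = a ^+ q * x ^+ q + alpha ^+ q * (x ^+ q) ^+ 2
     + beta ^+ q * (x * x ^+ q) + (1 + delta).
  rewrite /g /fU !fD !exprMn hdq (exprSr x q) exprMn fK; ring.
have E : g a x + g a x ^+ q = Ph a x.
  rewrite gq /g /fU /Ph /Qf /B (mulnC 2%N) exprM (exprSr x q).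
  have t := two0. ring: t.
rewrite /inFq -E; split; first by move=> ->; rewrite xx.
by move/eqP; rewrite -eq2 => /eqP.
Qed.

Lemma PhD a x s : Ph a (x + s) = Ph a x + Qf s + Mf a x s.
Proof. by rewrite /Ph QD fD /Mf; ring. Qed.

Lemma MfFq a x u : Mf a x u ^+ q = Mf a x u.
Proof.
have -> : Mf a x u = (B * x ^+ q * u + a * u) + (B * x ^+ q * u + a * u) ^+ q.
  by rewrite /Mf fD !exprMn BqE fK; ring.
exact: Fq_tr.
Qed.

Lemma Qscale l u : l ^+ q = l -> Qf (l * u) = l ^+ 2 * Qf u.
Proof.
move=> hl; rewrite /Qf !exprMn (mulnC 2%N) (exprM l) (exprSr l q) hl; ring.
Qed.

Lemma Mscale a x l u : l ^+ q = l -> Mf a x (l * u) = l * Mf a x u.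
Proof. by move=> hl; rewrite /Mf !exprMn hl; ring. Qed.

Lemma Mf0 a x : Mf a x 0 = 0.
Proof. by rewrite /Mf expr0n eqn0Ngt q0 /=; ring. Qed.


Lemma U_aff x r : r ^+ q = r -> Uab q alpha beta (mkpt x (fU x + r) 1).
Proof.
move=> hr; left; exists x, r; split => //; exists 1; first exact: oner_neq0.
by rewrite /scale_pt /mkpt /px /py /pz /= !mul1r.
Qed.

Lemma U_inf : Uab q alpha beta (mkpt 0 1 0).
Proof.
right; exists 1; first exact: oner_neq0.
by rewrite /scale_pt /mkpt /px /py /pz /= !mul1r.
Qed.

Lemma pedal_fwd (htr : abs_trace h (alpha ^+ q.+1 / (beta ^+ q + beta) ^+ 2) = 0)
  (T : pt F) : pedal (Uab q alpha beta) (mkpt 0 delta 1) T ->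
  exists x : F,
    1 + alpha * x ^+ 2 + alpha ^+ q * x ^+ (2 * q) + (beta + beta ^+ q) * x ^+ q.+1 = 0
    /\ proj_eq (mkpt x (alpha * x ^+ 2 + alpha ^+ q * x ^+ (2 * q) + delta ^+ q) 1) T.
Proof.
have t := two0.
case=> [[[l1 l2] l3] [[lnz [UT [lT uniq]]] lR]].
move: lR; rewrite /on_line /px /py /pz /mkpt /= => lR.
have l3E : l3 = l2 * delta.
  by apply/eqP; rewrite eq2; apply/eqP; rewrite -lR; ring.
have [l20 | l2n] := eqVneq l2 0.
  exfalso; move: l3E; rewrite l20 mul0r => l30.
  have P1U : Uab q alpha beta (mkpt 0 0 1).
    have e0 : (0 : F) ^+ q = 0 by rewrite expr0n eqn0Ngt q0.
    have f0 : fU 0 + 0 = 0 by rewrite /fU !expr0n /= !mulr0 !addr0.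
    by have := U_aff 0 0 e0; rewrite f0.
  have P1 := uniq (mkpt 0 0 1) _ P1U.
  have P2 := uniq (mkpt 0 1 0) _ U_inf.
  case: P1.
  - by case=> /eqP; rewrite oner_eq0.
  - by rewrite /on_line /px /py /pz /mkpt /= l20 l30; ring.
  move=> k1 _ E1; case: P2.
  - by case=> /eqP; rewrite oner_eq0.
  - by rewrite /on_line /px /py /pz /mkpt /= l20 l30; ring.
  move=> k2 k2n E2.
  move: E1 E2; rewrite /scale_pt /mkpt /px /py /pz /= => -[_ _ E1] [_ _ E2].
  have : pz T = 0.
    by move/eqP: E2; rewrite eq_sym mulf_eq0 (negbTE k2n) /= => /eqP.
  by rewrite /pz => Tz; move/eqP: E1; rewrite Tz mulr0 oner_eq0.
pose a := l1 / l2.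
have l1E : l1 = l2 * a by rewrite /a mulrC divfK.
rewrite l1E l3E in lT uniq.
move: UT => [[x0 [r0 [r0q [k kn ET]]]] | [k kn ET]]; last first.
  exfalso; move: lT; rewrite ET /on_line /scale_pt /mkpt /px /py /pz /= => lT.
  have : l2 * k = 0 by rewrite -lT; ring.
  by move/eqP; rewrite mulf_eq0 (negbTE l2n) (negbTE kn).
move: lT; rewrite ET /on_line /scale_pt /mkpt /px /py /pz /= => lT.
have Hs : a * x0 + fU x0 + r0 + delta = 0.
  have : l2 * k * (a * x0 + fU x0 + r0 + delta) = 0 by rewrite -lT /fU; ring.
  by move/eqP; rewrite !mulf_eq0 (negbTE l2n) (negbTE kn) /= => /eqP.
have r0E : r0 = g a x0.
  by apply/eqP; rewrite eq2 /g; apply/eqP; rewrite -Hs; ring: t.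
have Ph0 : Ph a x0 = 0 by apply/GinFq; rewrite -r0E.
have Mz : forall u, Mf a x0 u = 0.
  move=> u; apply/eqP/negPn/negP => Mn.
  have u0 : u != 0 by apply: contraNneq Mn => ->; rewrite Mf0.
  have Qn := aniso htr _ u0.

  pose lam := Mf a x0 u / Qf u.
  have lq : lam ^+ q = lam by rewrite /lam exprMn exprVn MfFq QfFq.
  have lQ : lam * Qf u = Mf a x0 u by rewrite /lam divfK.
  pose x := x0 + lam * u.
  have Phx : Ph a x = 0.
    rewrite /x PhD Ph0 add0r Qscale // Mscale // -lQ; ring: t.
  have PU := U_aff x (g a x) ((GinFq a x).2 Phx).
  case: (uniq _ _ PU).
  - by case=> _ _ /eqP; rewrite oner_eq0.
  - by rewrite /on_line /px /py /pz /mkpt /= /g; ring: t.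
  move=> k' _; rewrite /scale_pt /mkpt /px /py /pz /= => -[Ex _ E1].
  have xx0 : x = x0.
    move: Ex E1; rewrite ET /scale_pt /mkpt /px /py /pz /= => -> E1.
    have -> : k' * (k * x0) = (k' * (k * 1)) * x0 by ring.
    by rewrite -E1 mul1r.
  have : lam * u = 0 by apply: (@addrI _ x0); rewrite addr0.
  move/eqP; rewrite mulf_eq0 (negbTE u0) orbF => /eqP l0.
  by move: Mn; rewrite -lQ l0 mul0r eqxx.
have eE : (B * x0 ^+ q + a) ^+ q = 0.
  have M1 := Mz 1; have Md := Mz delta.
  have -> : (B * x0 ^+ q + a) ^+ q = B * x0 + a ^+ q by rewrite fD exprMn BqE fK.
  move: M1 Md; rewrite /Mf expr1n hdq => M1 Md.
  have -> : B * x0 + a ^+ q = (B * (x0 ^+ q * delta + x0 * (1 + delta)) + a * delta +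
    a ^+ q * (1 + delta)) + (B * (x0 ^+ q * 1 + x0 * 1) + a * 1 + a ^+ q * 1) * delta.
    by ring: t.
  by rewrite Md M1 mul0r addr0.
have e0 : B * x0 ^+ q + a = 0.
  by rewrite -[LHS]fK eE expr0n eqn0Ngt q0.
have aE : a = B * x0 ^+ q.
  by apply/eqP; rewrite eq2 addrC; apply/eqP.
have Qx0 : Qf x0 = 1.
  move: Ph0; rewrite /Ph aE exprMn BqE fK => P0.
  have -> : Qf x0 = (B * x0 ^+ q * x0 + B * x0 * x0 ^+ q + Qf x0 + 1) + 1 by ring: t.
  by rewrite P0 add0r.
exists x0; split.
  have -> : 1 + alpha * x0 ^+ 2 + alpha ^+ q * x0 ^+ (2 * q) + (beta + beta ^+ q) * x0 ^+ q.+1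
    = 1 + Qf x0 by rewrite /Qf /B; ring.
  by rewrite Qx0 xx.
exists k => //; rewrite /scale_pt /mkpt /px /py /pz /=; congr (_, k * _, _).
rewrite r0E /g /fU hdq aE.
have -> : alpha * x0 ^+ 2 + alpha ^+ q * x0 ^+ (2 * q) + (1 + delta) =
   Qf x0 + 1 + (B * x0 ^+ q * x0 + delta) by rewrite /Qf (exprSr x0 q); ring: t.
rewrite Qx0 xx add0r (exprSr x0 q); ring: t.
Qed.


Lemma yE x0 : Qf x0 = 1 ->
  fU x0 + g (B * x0 ^+ q) x0 = alpha * x0 ^+ 2 + alpha ^+ q * x0 ^+ (2 * q) + delta ^+ q.
Proof.
move=> Qx0; have t := two0; rewrite /g /fU hdq.
have -> : alpha * x0 ^+ 2 + alpha ^+ q * x0 ^+ (2 * q) + (1 + delta) =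
   Qf x0 + 1 + (B * x0 ^+ q * x0 + delta) by rewrite /Qf (exprSr x0 q); ring: t.
rewrite Qx0 xx add0r (exprSr x0 q); ring: t.
Qed.

Lemma pedal_bwd (htr : abs_trace h (alpha ^+ q.+1 / (beta ^+ q + beta) ^+ 2) = 0)
  (T : pt F) (x0 : F) :
    1 + alpha * x0 ^+ 2 + alpha ^+ q * x0 ^+ (2 * q) + (beta + beta ^+ q) * x0 ^+ q.+1 = 0 ->
    proj_eq (mkpt x0 (alpha * x0 ^+ 2 + alpha ^+ q * x0 ^+ (2 * q) + delta ^+ q) 1) T ->
  pedal (Uab q alpha beta) (mkpt 0 delta 1) T.
Proof.
have t := two0.
move=> Heq [k kn ET].
have Qx0 : Qf x0 = 1.
  apply/eqP; rewrite eq2 addrC; apply/eqP; rewrite -[RHS]Heq /Qf /B; ring.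
pose a := B * x0 ^+ q.
have Ph0 : Ph a x0 = 0.
  by rewrite /Ph /a exprMn BqE fK Qx0; ring: t.
have gq := (GinFq a x0).2 Ph0.
rewrite -yE // -/a in ET.
exists (mkpt a 1 delta); split; last first.
  by rewrite /on_line /px /py /pz /mkpt /=; ring: t.
split; first by case=> _ /eqP; rewrite oner_eq0.
split.
  left; exists x0, (g a x0); split => //; exists k => //.
split.
  by rewrite ET /on_line /scale_pt /px /py /pz /mkpt /= /g; ring: t.
move=> P Pnz [[x [r [rq [k' k'n EP]]]] | [k' k'n EP]]; last first.
  rewrite EP /on_line /scale_pt /px /py /pz /mkpt /= => H.
  by exfalso; move: H; rewrite !mulr0 mulr1 mul1r add0r addr0 => /eqP; rewrite (negbTE k'n).
rewrite EP /on_line /scale_pt /px /py /pz /mkpt /= => H.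
have Hs : a * x + fU x + r + delta = 0.
  have : k' * (a * x + fU x + r + delta) = 0 by rewrite -H /fU; ring.
  by move/eqP; rewrite mulf_eq0 (negbTE k'n) /= => /eqP.
have rE : r = g a x.
  by apply/eqP; rewrite eq2 /g; apply/eqP; rewrite -Hs; ring: t.
have Phx : Ph a x = 0 by apply/GinFq; rewrite -rE.
have xE : x = x0 + (x + x0) by ring: t.
have Ms : Mf a x0 (x + x0) = 0.
  by rewrite /Mf /a exprMn BqE fK; ring: t.
have Qs : Qf (x + x0) = 0.
  by move: Phx; rewrite xE PhD Ph0 Ms add0r addr0 -xE.
have xx0 : x = x0.
  apply/eqP; rewrite eq2; apply/negP => /negP nz.
  by move: (aniso htr _ nz); rewrite Qs eqxx.
exists (k' / k); first by rewrite mulf_neq0 // invr_neq0.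
rewrite ET rE xx0 /scale_pt /px /py /pz /mkpt /=.
by rewrite !mulrA !divfK // /fU expr2 mulrA.

Qed.

Lemma part2 (htr : abs_trace h (alpha ^+ q.+1 / (beta ^+ q + beta) ^+ 2) = 0)
  (T : pt F) : pedal (Uab q alpha beta) (mkpt 0 delta 1) T ->
     exists E : pt F,
       ((exists s : F, inFq q s /\ E = mkpt 0 (s + delta ^+ q) 1) \/ E = mkpt 0 1 0)
       /\ collinear (mkpt 1 0 0) E T.
Proof.
move=> /(pedal_fwd htr) [x0 [_ [k kn ET]]].
exists (mkpt 0 (alpha * x0 ^+ 2 + alpha ^+ q * x0 ^+ (2 * q) + delta ^+ q) 1); split.
  left; exists (alpha * x0 ^+ 2 + alpha ^+ q * x0 ^+ (2 * q)); split => //.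
  have -> : alpha ^+ q * x0 ^+ (2 * q) = (alpha * x0 ^+ 2) ^+ q by rewrite exprMn -exprM.
  exact: Fq_tr.
by rewrite ET /collinear /det3 /scale_pt /px /py /pz /mkpt /=; ring.
Qed.

End S.

Theorem lemma3p2 (F : finFieldType) (h q : nat) (delta v alpha beta : F)
  (hq : q = (2 ^ h)%N) (hh : (2 <= h)%N) (hF : #|F| = (q ^ 2)%N)
  (hdq : delta ^+ q = 1 + delta) (hd2 : delta ^+ 2 = v + delta)
  (hvq : inFq q v) (hv1 : v != 1) (hTv : abs_trace h v = 1)
  (ha0 : alpha != 0) (hb : ~ inFq q beta)
  (htr : abs_trace h (alpha ^+ q.+1 / (beta ^+ q + beta) ^+ 2) = 0) :
  let U := Uab q alpha beta in
  let R := mkpt 0 delta 1 in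
  (forall T : pt F,
     pedal U R T <->
     exists x : F,
       1 + alpha * x ^+ 2 + alpha ^+ q * x ^+ (2 * q) + (beta + beta ^+ q) * x ^+ q.+1 = 0
       /\ proj_eq (mkpt x (alpha * x ^+ 2 + alpha ^+ q * x ^+ (2 * q) + delta ^+ q) 1) T)
  /\
  (forall T : pt F, pedal U R T ->
     exists E : pt F,
       ((exists s : F, inFq q s /\ E = mkpt 0 (s + delta ^+ q) 1) \/ E = mkpt 0 1 0)
       /\ collinear (mkpt 1 0 0) E T).
Proof.
move=> U R; rewrite /U /R; split.
  move=> T; split.
    exact: (@pedal_fwd F h q delta alpha beta hq hF hdq hb htr T).
  by case=> x [H1 H2]; exact: (@pedal_bwd F h q delta alpha beta hq hF hdq hb htr T x H1 H2).
exact: (@part2 F h q delta alpha beta hq hF hdq hb htr).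
Qed.
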